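(* Let $K_{\Delta p},K_{\Delta v},\lambda,\gamma_{\Delta p},\gamma_{\Delta v}>0$ and $a,b\ge0$. For each $N\in\mathbb{N}$ consider states $\tilde\chi_i=(x_{1,i},x_{2,i},x_{3,i})\in\mathbb{R}^3$, $i=0,\dots,N$, with dynamics $$\dot x_{1,i}=x_{2,i},\quad \dot x_{2,i}=-K_{\Delta p}x_{2,i}-K_{\Delta v}\big(x_{2,i}+K_{\Delta p}x_{1,i}\big)-x_{1,i}-x_{3,i},\quad \dot x_{3,i}=-\lambda x_{3,i}+a\psi^{i-1}_{\Delta p}+b\psi^{i-1}_{\Delta v},$$ where $\psi^{-1}_{\Delta p}=\psi^{-1}_{\Delta v}=0$ and, for $i\ge1$, with $m=i-1$, $$\psi^{m}_{\Delta p}=\gamma_{\Delta p}\,\mathrm{sign}\Big(\tfrac{1}{m+1}\textstyle\sum_{j=0}^{m}x_{1,j}\Big)\sqrt{\sigma^2_{1,m}},\qquad \psi^{m}_{\Delta v}=\gamma_{\Delta v}\,\mathrm{sign}\Big(\tfrac{1}{m+1}\textstyle\sum_{j=0}^{m}x_{2,j}\Big)\sqrt{\sigma^2_{2,m}},$$ $\sigma^2_{k,m}$ being the population variance of $x_{k,0},\dots,x_{k,m}$. (Here $x_{1,i}=\Delta p_i+\Delta\bar p$, $x_{2,i}=\Delta v_i$, $x_{3,i}=\rho_i$ are the distance error, speed difference and macroscopic state of the $i$-th leader–follower pair under the constant-spacing control law $u_i=u_{i-1}-K_{\Delta p}\Delta v_i-K_{\Delta v}(\Delta v_i+K_{\Delta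 p}(\Delta p_i+\Delta\bar p))-(\Delta p_i+\Delta\bar p)-\rho_i$.) Assume solutions exist on $[0,\infty)$. Then: (1) the origin of each isolated subsystem (i.e. with $a\psi^{i-1}_{\Delta p}+b\psi^{i-1}_{\Delta v}$ replaced by $0$) is globally exponentially stable; (2) there exist $\beta^{cp}\in\mathcal{KL}$ and $\tilde\gamma^{cp}>0$ such that for every $N$, every solution, every $i$ and all $t\ge0$, $$|\tilde\chi_i(t)|\le\beta^{cp}(|\tilde\chi_i(0)|,t)+\tilde\gamma^{cp}\max_{j=0,\dots,i-1}\sup_{0\le\tau\le t}|\tilde\chi_j(\tau)|;$$ (3) there exist $a,b\ge0$ (not both zero) for which this holds with $\tilde\gamma^{cp}\in(0,1)$, and for such $a,b$ the origin of the interconnected system is Asymptotically String Stable.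
   Context: $|\cdot|$ is the Euclidean norm; $\mathrm{sign}$ takes values in $\{-1,0,1\}$. String Stability of the origin means: for every $\epsilon>0$ there exists $\delta>0$ such that for all $N\in\mathbb{N}$ and every solution, $\max_{i=0,\dots,N}|\tilde\chi_i(0)|<\delta$ implies $\max_{i=0,\dots,N}|\tilde\chi_i(t)|<\epsilon$ for all $t\ge0$. Asymptotic String Stability means String Stability together with: for all $N$, every solution satisfies $\lim_{t\to\infty}|\tilde\chi_i(t)|=0$ for all $i=0,\dots,N$. *)

(* Defs.v *)
From Stdlib Require Import Reals Lra.
From Coquelicot Require Import Coquelicot.
Open Scope R_scope.

Definition Rsign (x : R) : R :=
  if Rlt_dec 0 x then 1 else if Rlt_dec x 0 then -1 else 0.

(* mean and population variance of y 0, ..., y m  (sum_f_R0 y m = y 0 + ... + y m) *)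
Definition meanR (y : nat -> R) (m : nat) : R := sum_f_R0 y m / INR (S m).
Definition varR (y : nat -> R) (m : nat) : R :=
  sum_f_R0 (fun j => (y j - meanR y m) ^ 2) m / INR (S m).

Definition psi (g : R) (y : nat -> R) (m : nat) : R :=
  g * Rsign (meanR y m) * sqrt (varR y m).

Definition coupling (gp gv a b : R) (x1 x2 : nat -> R -> R) (i : nat) (t : R) : R :=
  match i with
  | O => 0
  | S m => a * psi gp (fun j => x1 j t) m + b * psi gv (fun j => x2 j t) m
  end.

(* f is a (classical) solution of f' = df on [0, oo): right-continuous at 0,
   differentiable with derivative df t at every t > 0 *)
Definition traj_on (f df : R -> R) : Prop :=
  (forall eps, 0 < eps -> exists delta, 0 < delta /\
      forall s, 0 <= s < delta -> Rabs (f s - f 0) < eps) /\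
  (forall t, 0 < t -> is_derive f t (df t)).

Definition pair_sol (Kp Kv lam : R) (u : R -> R) (x1 x2 x3 : R -> R) : Prop :=
  traj_on x1 x2 /\
  traj_on x2 (fun t => - Kp * x2 t - Kv * (x2 t + Kp * x1 t) - x1 t - x3 t) /\
  traj_on x3 (fun t => - lam * x3 t + u t).

Definition platoon_sol (Kp Kv lam gp gv a b : R) (N : nat)
    (x1 x2 x3 : nat -> R -> R) : Prop :=
  forall i, (i <= N)%nat ->
    pair_sol Kp Kv lam (coupling gp gv a b x1 x2 i) (x1 i) (x2 i) (x3 i).

Definition nrm3 (p q r : R) : R := sqrt (p ^ 2 + q ^ 2 + r ^ 2).
Definition chi_norm (x1 x2 x3 : nat -> R -> R) (i : nat) (t : R) : R :=
  nrm3 (x1 i t) (x2 i t) (x3 i t).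

Definition classK (al : R -> R) : Prop :=
  al 0 = 0 /\
  (forall r, 0 <= r -> forall eps, 0 < eps -> exists delta, 0 < delta /\
      forall s, 0 <= s -> Rabs (s - r) < delta -> Rabs (al s - al r) < eps) /\
  (forall r s, 0 <= r -> r < s -> al r < al s).

Definition classKL (beta : R -> R -> R) : Prop :=
  (forall t, 0 <= t -> classK (fun r => beta r t)) /\
  (forall r, 0 <= r ->
     (forall t1 t2, 0 <= t1 -> t1 <= t2 -> beta r t2 <= beta r t1) /\
     is_lim (fun t => beta r t) p_infty (Finite 0)).

(* |chi_i(t)| <= beta(|chi_i(0)|,t) + g * max_{j<i} sup_{[0,t]} |chi_j|,
   the max/sup written out: for every M >= 0 bounding |chi_j(tau)| for j<i,
   tau in [0,t] (for i = 0 the max over the empty set is 0). *)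
Definition gain_estimate (Kp Kv lam gp gv a b : R) (beta : R -> R -> R) (g : R) : Prop :=
  forall (N : nat) (x1 x2 x3 : nat -> R -> R),
    platoon_sol Kp Kv lam gp gv a b N x1 x2 x3 ->
    forall i, (i <= N)%nat -> forall t, 0 <= t ->
    forall M, 0 <= M ->
      (forall j tau, (j < i)%nat -> 0 <= tau <= t -> chi_norm x1 x2 x3 j tau <= M) ->
      chi_norm x1 x2 x3 i t <= beta (chi_norm x1 x2 x3 i 0) t + g * M.

Definition StringStable (Kp Kv lam gp gv a b : R) : Prop :=
  forall eps, 0 < eps -> exists delta, 0 < delta /\
    forall (N : nat) (x1 x2 x3 : nat -> R -> R),
      platoon_sol Kp Kv lam gp gv a b N x1 x2 x3 ->
      (forall i, (i <= N)%nat -> chi_norm x1 x2 x3 i 0 < delta) ->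
      forall t, 0 <= t -> forall i, (i <= N)%nat -> chi_norm x1 x2 x3 i t < eps.

Definition AsymptoticallyStringStable (Kp Kv lam gp gv a b : R) : Prop :=
  StringStable Kp Kv lam gp gv a b /\
  forall (N : nat) (x1 x2 x3 : nat -> R -> R),
    platoon_sol Kp Kv lam gp gv a b N x1 x2 x3 ->
    forall i, (i <= N)%nat ->
      is_lim (fun t => chi_norm x1 x2 x3 i t) p_infty (Finite 0).

(* Main.v *)
Require Import Defs.
From Stdlib Require Import Reals Lra Psatz Arith Wf_nat.
From Coquelicot Require Import Coquelicot.
Open Scope R_scope.

Lemma cR_plus (f g : R -> R) x : continuous f x -> continuous g x -> continuous (fun y => f y + g y) x.
Proof. intros; now apply (continuous_plus f g). Qed.
Lemma cR_minus (f g : R -> R) x : continuous f x -> continuous g x -> continuous (fun y => f y - g y) x.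
Proof. intros; now apply (continuous_minus f g). Qed.
Lemma cR_mult (f g : R -> R) x : continuous f x -> continuous g x -> continuous (fun y => f y * g y) x.
Proof. intros; now apply (continuous_mult f g). Qed.
Lemma cR_const (c x : R) : continuous (fun _ : R => c) x.
Proof. apply continuous_const. Qed.
Lemma cR_id (x : R) : continuous (fun y : R => y) x.
Proof. apply continuous_id. Qed.

Lemma cont_epsdelta (g : R -> R) s :
  (forall eps, 0 < eps -> exists d, 0 < d /\ forall y, Rabs (y - s) < d -> Rabs (g y - g s) < eps) ->
  continuous g s.
Proof.
  intros H. apply continuity_pt_filterlim.
  intros eps Heps. destruct (H eps Heps) as [d [Hd Hy]].
  exists d; split; auto. intros y [_ Hy']. apply Hy. exact Hy'.
Qed.

Lemma cont_to_ed (g : R -> R) s : continuous g s ->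
  forall eps, 0 < eps -> exists d, 0 < d /\ forall y, Rabs (y - s) < d -> Rabs (g y - g s) < eps.
Proof.
  intros H eps He. apply continuity_pt_filterlim in H.
  destruct (H eps He) as [d [Hd Hy]]. exists d; split; auto.
  intros y Hys. destruct (Req_dec y s) as [->|Hne].
  - rewrite Rminus_diag, Rabs_R0; auto.
  - apply Hy. split; [split; [exact I| auto] | exact Hys].
Qed.

Lemma traj_cont f df : traj_on f df -> forall s, 0 <= s -> continuous (fun y => f (Rmax 0 y)) s.
Proof.
  intros [H0 Hd] s Hs. destruct (Rle_lt_or_eq_dec _ _ Hs) as [Hp|Hq].
  - apply continuous_ext_loc with f.
    + exists (mkposreal s Hp). intros y Hy.
      unfold ball in Hy; simpl in Hy; unfold AbsRing_ball, abs, minus, plus, opp in Hy; simpl in Hy.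
      apply Rabs_def2 in Hy. rewrite Rmax_right by lra. reflexivity.
    + apply (ex_derive_continuous (K:=R_AbsRing) (V:=R_NormedModule)). exists (df s). apply Hd; auto.
  - subst s. apply cont_epsdelta. intros eps He. destruct (H0 eps He) as [d [Hd0 Hy]].
    exists d; split; [exact Hd0|]. intros y Hyd. rewrite (Rmax_left 0 0) by lra.
    destruct (Rle_dec y 0).
    + rewrite Rmax_left by lra. rewrite Rminus_diag, Rabs_R0; auto.
    + rewrite Rmax_right by lra. apply Hy. rewrite Rminus_0_r in Hyd.
      apply Rabs_def2 in Hyd; lra.
Qed.

Lemma compare (W dW : R -> R) k D t :
  0 < k -> 0 <= D -> 0 <= t ->
  (forall s, 0 <= s <= t -> continuous (fun y => W (Rmax 0 y)) s) ->
  (forall s, 0 < s < t -> is_derive W s (dW s)) ->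
  (forall s, 0 <= s <= t -> dW s <= - k * W s + D) ->
  W t <= exp (- k * t) * W 0 + D / k.
Proof.
  intros Hk HD Ht Hc Hd Hineq.
  set (h := fun s => exp (k * s) * (W (Rmax 0 s) - D / k)).
  set (dh := fun s => exp (k*s) * (k * (W s - D/k) + dW s)).
  destruct (MVT_gen h 0 t dh) as [c [Hc1 Heq]].
  - rewrite Rmin_left, Rmax_right by lra. intros x Hx.
    apply is_derive_ext_loc with (fun s => exp (k*s) * (W s - D/k)).
    + exists (mkposreal x (proj1 Hx)). intros y Hy.
      unfold ball in Hy; simpl in Hy; unfold AbsRing_ball, abs, minus, plus, opp in Hy; simpl in Hy.
      apply Rabs_def2 in Hy. unfold h. rewrite Rmax_right by lra. reflexivity.
    + replace (dh x) with (plus (mult (k*exp(k*x)) (W x - D/k)) (mult (exp(k*x)) (dW x - 0))).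
      * apply (is_derive_mult (fun s => exp (k*s)) (fun s => W s - D/k)).
        -- auto_derive; auto; ring.
        -- apply (is_derive_minus W (fun _ => D/k)). apply Hd; lra. apply (is_derive_const (K:=R_AbsRing) (V:=R_NormedModule)).
        -- intros; apply Rmult_comm.
      * unfold dh, plus, mult; simpl. ring.
  - rewrite Rmin_left, Rmax_right by lra. intros x Hx.
    apply continuity_pt_filterlim. change (continuous h x). unfold h.
    apply cR_mult.
    + apply continuous_exp_comp. apply cR_mult; [apply cR_const|apply cR_id].
    + apply cR_minus; [apply Hc; lra | apply cR_const].
  - rewrite Rmin_left, Rmax_right in Hc1 by lra.
    assert (Hdh : dh c <= 0).
    { unfold dh. assert (0 < exp (k*c)) by apply exp_pos.
      assert (k * (W c - D/k) + dW c <= 0).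
      { specialize (Hineq c Hc1). replace (k * (W c - D/k)) with (k * W c - D) by (field; lra). lra. }
      nra. }
    unfold h in Heq. rewrite (Rmax_right 0 t) in Heq by lra. rewrite (Rmax_left 0 0) in Heq by lra.
    rewrite Rmult_0_r, exp_0 in Heq.
    assert (HE : exp (k*t) * exp (-k*t) = 1).
    { rewrite <- exp_plus. replace (k*t + -k*t) with 0 by ring. apply exp_0. }
    assert (0 < exp (k*t)) by apply exp_pos. assert (0 < exp (-k*t)) by apply exp_pos.
    assert (0 <= D/k) by (apply Rdiv_le_0_compat; lra).
    set (q := D/k) in *. set (E := exp (k*t)) in *. set (F := exp (-k*t)) in *.
    assert (E * (W t - q) <= W 0 - q) by nra.
    assert (W t - q <= F * (W 0 - q)).
    { replace (W t - q) with (F * (E * (W t - q))) by (transitivity ((E*F) * (W t - q)); [ring| rewrite HE; ring]).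
      apply Rmult_le_compat_l; lra. }
    nra.
Qed.

Definition kk (Kp Kv lam : R) := Rmin (2*Kp) (Rmin Kv (lam/2)).
Definition c1 (Kp Kv lam : R) := (3+2*Kp^2)*(1 + /(lam*Kv)).
Definition c2 (Kp Kv lam : R) := lam*Kv*(3+2*Kp^2)+1.
Definition KK Kp Kv lam := sqrt (c1 Kp Kv lam * c2 Kp Kv lam).
Definition GG Kp Kv lam := sqrt (c1 Kp Kv lam * 2 / (lam * kk Kp Kv lam)).

Lemma kk_props Kp Kv lam : 0 < Kp -> 0 < Kv -> 0 < lam ->
  0 < kk Kp Kv lam /\ kk Kp Kv lam <= 2*Kp /\ kk Kp Kv lam <= Kv /\ kk Kp Kv lam <= lam/2.
Proof.
  intros. unfold kk. repeat split.
  - apply Rmin_glb_lt; [lra|]. apply Rmin_glb_lt; lra.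
  - apply Rmin_l.
  - eapply Rle_trans; [apply Rmin_r|apply Rmin_l].
  - eapply Rle_trans; [apply Rmin_r|apply Rmin_r].
Qed.

Lemma sqrt_le_sum S A B : 0 <= A -> 0 <= B -> S <= A^2 + B^2 -> sqrt S <= A + B.
Proof.
  intros HA HB HS. rewrite <- (sqrt_pow2 (A+B)) by lra.
  apply sqrt_le_1_alt. nra.
Qed.

Lemma low_alg Kp Kv lam a1 a2 a3 : 0 < Kp -> 0 < Kv -> 0 < lam ->
  a1^2 + a2^2 + a3^2 <= (3+2*Kp^2)*(1 + /(lam*Kv)) * (lam*Kv*(a1^2 + (a2 + Kp*a1)^2) + a3^2).
Proof.
  intros HKp HKv Hl.
  assert (HP : 0 < /(lam*Kv)) by (apply Rinv_0_lt_compat; nra).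
  assert (HPe : lam*Kv * /(lam*Kv) = 1) by (field; lra).
  set (P := /(lam*Kv)) in *. clearbody P.
  set (e := a2 + Kp*a1).
  replace a2 with (e - Kp*a1) by (unfold e; ring).
  replace (e - Kp * a1 + Kp * a1) with e by ring. clearbody e.
  assert (G1 : a1 ^ 2 + e^2 + a3^2 <= (1 + P) * (lam * Kv * (a1 ^ 2 + e ^ 2) + a3 ^ 2)).
  { replace ((1 + P) * (lam * Kv * (a1 ^ 2 + e ^ 2) + a3 ^ 2)) with
      ((lam*Kv + lam*Kv*P) * (a1^2 + e^2) + (1+P)*a3^2) by ring.
    rewrite HPe. assert (0 <= lam*Kv*(a1^2+e^2)) by (apply Rmult_le_pos; nra).
    assert (0 <= P * a3^2) by (apply Rmult_le_pos; nra). nra. }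
  assert (G2 : (e - Kp*a1)^2 <= 2*e^2 + 2*Kp^2*a1^2) by (assert (0 <= (e + Kp*a1)^2) by apply pow2_ge_0; nra).
  assert (G3 : a1 ^ 2 + (e - Kp * a1) ^ 2 + a3 ^ 2 <= (3 + 2*Kp^2) * (a1^2 + e^2 + a3^2)).
  { assert (0 <= Kp^2 * e^2) by nra. assert (0 <= Kp^2*a3^2) by nra. nra. }
  assert (0 <= 3 + 2*Kp^2) by nra.
  rewrite Rmult_assoc. eapply Rle_trans; [exact G3|]. apply Rmult_le_compat_l; auto.
Qed.

Lemma up_alg Kp Kv lam a1 a2 a3 : 0 < Kp -> 0 < Kv -> 0 < lam ->
  lam*Kv*(a1^2 + (a2 + Kp*a1)^2) + a3^2 <= (lam*Kv*(3+2*Kp^2)+1) * (a1^2 + a2^2 + a3^2).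
Proof.
  intros HKp HKv Hl.
  assert (0 < lam*Kv) by nra.
  assert (G2 : (a2 + Kp*a1)^2 <= 2*a2^2 + 2*Kp^2*a1^2) by (assert (0 <= (a2 - Kp*a1)^2) by apply pow2_ge_0; nra).
  assert (G3 : a1^2 + (a2 + Kp*a1)^2 <= (3 + 2*Kp^2) * (a1^2+a2^2+a3^2)).
  { assert (0 <= Kp^2 * a2^2) by nra. assert (0 <= Kp^2*a3^2) by nra. nra. }
  assert (lam*Kv*(a1^2 + (a2 + Kp*a1)^2) <= lam*Kv*((3 + 2*Kp^2) * (a1^2+a2^2+a3^2))).
  { apply Rmult_le_compat_l; lra. }
  assert (0 <= a1^2) by nra. assert (0 <= a2^2) by nra. nra.
Qed.

Lemma pair_iss Kp Kv lam u x1 x2 x3 t U :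
  0 < Kp -> 0 < Kv -> 0 < lam ->
  pair_sol Kp Kv lam u x1 x2 x3 -> 0 <= t -> 0 <= U ->
  (forall s, 0 <= s <= t -> Rabs (u s) <= U) ->
  nrm3 (x1 t) (x2 t) (x3 t) <=
    KK Kp Kv lam * exp (- (kk Kp Kv lam / 2) * t) * nrm3 (x1 0) (x2 0) (x3 0)
    + GG Kp Kv lam * U.
Proof.
  intros HKp HKv Hl [T1 [T2 T3]] Ht HU Hu.
  destruct (kk_props Kp Kv lam HKp HKv Hl) as [Hk0 [Hk1 [Hk2 Hk3]]].
  set (k := kk Kp Kv lam) in *.
  set (W := fun s => lam*Kv*(x1 s^2 + (x2 s + Kp*x1 s)^2) + x3 s^2).
  set (d2 := fun s => - Kp * x2 s - Kv * (x2 s + Kp * x1 s) - x1 s - x3 s).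
  set (d3 := fun s => - lam * x3 s + u s).
  set (dW := fun s => lam*Kv*(2*x1 s * x2 s + 2*(x2 s + Kp*x1 s)*(d2 s + Kp * x2 s)) + 2 * x3 s * d3 s).
  set (D := 2 * U^2 / lam).
  assert (HD : 0 <= D) by (unfold D; apply Rdiv_le_0_compat; nra).
  assert (Hcmp : W t <= exp (- k * t) * W 0 + D / k).
  { apply compare with dW; auto.
    - intros s Hs.
      assert (C1 := traj_cont _ _ T1 s (proj1 Hs)).
      assert (C2 := traj_cont _ _ T2 s (proj1 Hs)).
      assert (C3 := traj_cont _ _ T3 s (proj1 Hs)).
      unfold W.
      repeat first [ apply cR_plus | apply cR_mult | apply cR_const | assumption ].
    - intros s Hs. unfold W, dW.
      destruct T1 as [_ D1]. destruct T2 as [_ D2]. destruct T3 as [_ D3].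
      specialize (D1 s (proj1 Hs)). specialize (D2 s (proj1 Hs)). specialize (D3 s (proj1 Hs)).
      auto_derive.
      + repeat split; eexists; eauto.
      + replace (Derive (fun x => x1 x) s) with (x2 s) by (symmetry; apply is_derive_unique; exact D1).
        replace (Derive (fun x => x2 x) s) with (d2 s) by (symmetry; apply is_derive_unique; exact D2).
        replace (Derive (fun x => x3 x) s) with (d3 s) by (symmetry; apply is_derive_unique; exact D3).
        ring.
    - intros s Hs. specialize (Hu s Hs). unfold dW, d2, d3, W.
      set (a1 := x1 s). set (a2 := x2 s). set (a3 := x3 s). set (v := u s).
      set (e := a2 + Kp * a1).
      replace a2 with (e - Kp*a1) by (unfold e; ring).
      assert (Hv2 : v^2 <= U^2).
      { rewrite <- (Rsqr_pow2 v). rewrite Rsqr_abs. rewrite Rsqr_pow2. apply pow_incr. split; [apply Rabs_pos|auto]. }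
      assert (F1 : k*(lam*Kv*a1^2) <= 2*Kp*(lam*Kv*a1^2)).
      { apply Rmult_le_compat_r; [|lra]. apply Rmult_le_pos; [nra| apply pow2_ge_0]. }
      assert (F2 : k*(lam*Kv*e^2) <= Kv*(lam*Kv*e^2)).
      { apply Rmult_le_compat_r; [|lra]. apply Rmult_le_pos; [nra| apply pow2_ge_0]. }
      assert (F3 : k*a3^2 <= lam/2*a3^2).
      { apply Rmult_le_compat_r; [apply pow2_ge_0|lra]. }
      assert (F4 : 0 <= lam * (Kv*e + a3)^2) by (apply Rmult_le_pos; [lra|apply pow2_ge_0]).
      assert (F5 : 2*a3*v <= lam/2*a3^2 + 2*v^2/lam).
      { assert (0 <= lam/2 * (a3 - 2*v/lam)^2) by (apply Rmult_le_pos; [lra|apply pow2_ge_0]).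
        replace (lam/2 * (a3 - 2*v/lam)^2) with (lam/2*a3^2 + 2*v^2/lam - 2*a3*v) in H by (field; lra).
        lra. }
      assert (F6 : 2*v^2/lam <= D).
      { unfold D. unfold Rdiv. apply Rmult_le_compat_r. left; apply Rinv_0_lt_compat; lra. lra. }
      replace (e - Kp * a1 + Kp * a1) with e by ring.
      nra. }
  assert (HP : 0 < /(lam*Kv)) by (apply Rinv_0_lt_compat; nra).
  assert (HPe : lam*Kv * /(lam*Kv) = 1) by (field; lra).
  assert (Hc1 : 0 < c1 Kp Kv lam) by (unfold c1; apply Rmult_lt_0_compat; nra).
  assert (Hc2 : 0 < c2 Kp Kv lam) by (unfold c2; assert (0 < lam*Kv) by nra; nra).
  set (n0 := x1 0^2 + x2 0^2 + x3 0^2).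
  set (nt := x1 t^2 + x2 t^2 + x3 t^2).
  assert (Hlow : nt <= c1 Kp Kv lam * W t).
  { unfold nt, W, c1. apply low_alg; auto. }
  assert (Hup : W 0 <= c2 Kp Kv lam * n0).
  { unfold W, c2, n0. apply up_alg; auto. }
  assert (Hexp : exp (- k * t) = exp (- (k/2) * t) ^ 2).
  { replace (-k*t) with (-(k/2)*t + -(k/2)*t) by field. rewrite exp_plus. ring. }
  assert (Hn0 : 0 <= n0) by (unfold n0; nra).
  assert (Hnt : 0 <= nt) by (unfold nt; nra).
  unfold nrm3. fold nt. fold n0.
  apply sqrt_le_sum.
  - unfold KK. apply Rmult_le_pos; [apply Rmult_le_pos; [apply sqrt_pos| left; apply exp_pos] | apply sqrt_pos].
  - unfold GG. apply Rmult_le_pos; [apply sqrt_pos | auto].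
  - assert (Hlk : 0 < lam * k) by nra.
    rewrite !Rpow_mult_distr. unfold KK, GG. fold k.
    rewrite !pow2_sqrt; [ | left; apply Rdiv_lt_0_compat; lra | nra | auto].
    rewrite <- Hexp.
    assert (HDk : c1 Kp Kv lam * 2 / (lam * k) * U ^ 2 = c1 Kp Kv lam * (D / k)).
    { unfold D. field. lra. }
    rewrite HDk.
    assert (0 < exp (-k*t)) by apply exp_pos.
    assert (W 0 * exp (-k*t) <= c2 Kp Kv lam * n0 * exp (-k*t)) by (apply Rmult_le_compat_r; lra).
    nra.
    nra.
Qed.

Lemma KL_exp C q : 0 < C -> 0 < q -> classKL (fun r t => C * r * exp (- q * t)).
Proof.
  intros HC Hq. split.
  - intros t Ht. assert (HE : 0 < exp (-q*t)) by apply exp_pos.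
    split; [ring|split].
    + intros r Hr eps He. exists (eps / (C * exp (-q*t))). split.
      * apply Rdiv_lt_0_compat; nra.
      * intros s Hs Hsr.
        replace (C * s * exp (- q * t) - C * r * exp (- q * t)) with ((C * exp(-q*t)) * (s - r)) by ring.
        rewrite Rabs_mult, (Rabs_pos_eq (C * exp (-q*t))) by nra.
        apply Rmult_lt_compat_l with (r := C * exp(-q*t)) in Hsr; [|nra].
        replace (C * exp (- q * t) * (eps / (C * exp (- q * t)))) with eps in Hsr by (field; nra).
        exact Hsr.
    + intros r s Hr Hrs. apply Rmult_lt_compat_r; [exact HE|]. nra.
  - intros r Hr. split.
    + intros t1 t2 H1 H2. apply Rmult_le_compat_l; [nra|].
      destruct (Rle_lt_or_eq_dec _ _ H2) as [H|H].
      * left. apply exp_increasing. nra.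
      * subst; lra.
    + apply is_lim_spec. intros eps. simpl.
      exists (C * r / (q * eps)). intros t Ht.
      assert (Heps := cond_pos eps).
      assert (0 <= C * r / (q * eps)) by (apply Rdiv_le_0_compat; nra).
      assert (HE : 0 < exp (-q*t)) by apply exp_pos.
      assert (HE2 : 1 + q*t <= exp (q*t)) by apply exp_ineq1_le.
      assert (HEE : exp (q*t) * exp (-q*t) = 1).
      { rewrite <- exp_plus. replace (q*t + -q*t) with 0 by ring. apply exp_0. }
      rewrite Rminus_0_r. rewrite Rabs_pos_eq; [| apply Rmult_le_pos; [nra|lra]].
      assert (Hqt : C * r < q * eps * t).
      { apply Rmult_lt_compat_l with (r := q*eps) in Ht; [|nra].
        replace (q * eps * (C * r / (q * eps))) with (C*r) in Ht by (field; nra). lra. }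
      (* C r exp(-qt) <= C r /(1+qt) < eps *)
      assert (HX : 0 <= C*r*exp(-q*t)) by (apply Rmult_le_pos; [nra|lra]).
      assert (H3 : C*r*exp(-q*t)*(1+q*t) <= C*r*exp(-q*t)*exp(q*t)) by (apply Rmult_le_compat_l; auto).
      replace (C*r*exp(-q*t)*exp(q*t)) with (C*r*(exp(q*t)*exp(-q*t))) in H3 by ring.
      rewrite HEE, Rmult_1_r in H3.
      set (X := C*r*exp(-q*t)) in *. clearbody X.
      assert (Htp : 0 < t) by lra.
      assert (X * (q*t) < eps * (q*t)) by nra.
      apply Rmult_lt_reg_r with (q*t); nra.
Qed.

Lemma Rsign_bound x : Rabs (Rsign x) <= 1.
Proof.
  unfold Rsign. destruct (Rlt_dec 0 x); [|destruct (Rlt_dec x 0)];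
  unfold Rabs; destruct (Rcase_abs _); lra.
Qed.

Lemma sum_bound (y : nat -> R) m M : (forall j, (j <= m)%nat -> Rabs (y j) <= M) ->
  Rabs (sum_f_R0 y m) <= M * INR (S m).
Proof.
  intros H. eapply Rle_trans; [apply Rsum_abs|]. rewrite <- sum_cte. apply sum_Rle. auto.
Qed.

Lemma var_bound (y : nat -> R) m M : 0 <= M -> (forall j, (j <= m)%nat -> Rabs (y j) <= M) ->
  sqrt (varR y m) <= 2 * M.
Proof.
  intros HM H.
  assert (Hn : 0 < INR (S m)) by (apply lt_0_INR; lia).
  assert (Hmean : Rabs (meanR y m) <= M).
  { unfold meanR. unfold Rdiv. rewrite Rabs_mult, Rabs_inv, (Rabs_pos_eq (INR (S m))) by lra.
    apply (Rmult_le_reg_r (INR (S m))); auto. rewrite Rmult_assoc, Rinv_l by lra. rewrite Rmult_1_r.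
    apply sum_bound; auto. }
  rewrite <- (sqrt_pow2 (2*M)) by lra. apply sqrt_le_1_alt.
  unfold varR. apply (Rmult_le_reg_r (INR (S m))); auto. unfold Rdiv.
  rewrite Rmult_assoc, Rinv_l by lra. rewrite Rmult_1_r.
  rewrite <- sum_cte. apply sum_Rle. intros j Hj. specialize (H j Hj).
  apply Rabs_le_between in H. apply Rabs_le_between in Hmean.
  set (a := y j) in *. set (b := meanR y m) in *. clearbody a b. nra.
Qed.

Lemma abs_le_nrm a b c : Rabs a <= nrm3 a b c.
Proof.
  unfold nrm3. rewrite <- sqrt_Rsqr_abs. apply sqrt_le_1_alt. unfold Rsqr.
  assert (0 <= b^2) by apply pow2_ge_0. assert (0 <= c^2) by apply pow2_ge_0. nra.
Qed.
Lemma abs_le_nrm2 a b c : Rabs b <= nrm3 a b c.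
Proof.
  unfold nrm3. rewrite <- sqrt_Rsqr_abs. apply sqrt_le_1_alt. unfold Rsqr.
  assert (0 <= a^2) by apply pow2_ge_0. assert (0 <= c^2) by apply pow2_ge_0. nra.
Qed.

Lemma psi_bound g y m M : 0 < g -> 0 <= M -> (forall j, (j <= m)%nat -> Rabs (y j) <= M) ->
  Rabs (psi g y m) <= g * (2 * M).
Proof.
  intros Hg HM H. unfold psi. rewrite !Rabs_mult, Rabs_pos_eq by lra.
  rewrite (Rabs_pos_eq (sqrt _)) by apply sqrt_pos.
  assert (H1 := Rsign_bound (meanR y m)). assert (H2 := var_bound y m M HM H).
  assert (0 <= sqrt (varR y m)) by apply sqrt_pos. assert (0 <= Rabs (Rsign (meanR y m))) by apply Rabs_pos.
  assert (Rabs (Rsign (meanR y m)) * sqrt (varR y m) <= 1 * (2*M)) by (apply Rmult_le_compat; auto).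
  rewrite Rmult_assoc. apply Rmult_le_compat_l; lra.
Qed.

Lemma coupling_bound gp gv a b x1 x2 x3 i s M : 0 < gp -> 0 < gv -> 0 <= a -> 0 <= b -> 0 <= M ->
  (forall j, (j < i)%nat -> chi_norm x1 x2 x3 j s <= M) ->
  Rabs (coupling gp gv a b x1 x2 i s) <= 2 * (a * gp + b * gv) * M.
Proof.
  intros Hgp Hgv Ha Hb HM H. destruct i as [|m]; simpl.
  - rewrite Rabs_R0. apply Rmult_le_pos; [|lra]. assert (0 <= a*gp) by nra. assert (0 <= b*gv) by nra. lra.
  - assert (P1 : Rabs (psi gp (fun j => x1 j s) m) <= gp * (2*M)).
    { apply psi_bound; auto. intros j Hj. eapply Rle_trans; [apply abs_le_nrm|]. apply H. lia. }
    assert (P2 : Rabs (psi gv (fun j => x2 j s) m) <= gv * (2*M)).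
    { apply psi_bound; auto. intros j Hj. eapply Rle_trans; [apply abs_le_nrm2|]. apply H. lia. }
    eapply Rle_trans; [apply Rabs_triang|]. rewrite !Rabs_mult, (Rabs_pos_eq a), (Rabs_pos_eq b) by lra.
    assert (a * Rabs (psi gp (fun j => x1 j s) m) <= a * (gp * (2*M))) by (apply Rmult_le_compat_l; auto).
    assert (b * Rabs (psi gv (fun j => x2 j s) m) <= b * (gv * (2*M))) by (apply Rmult_le_compat_l; auto).
    lra.
Qed.

Lemma gain_lemma Kp Kv lam gp gv a b g : 0 < Kp -> 0 < Kv -> 0 < lam -> 0 < gp -> 0 < gv ->
  0 <= a -> 0 <= b -> 2 * GG Kp Kv lam * (a * gp + b * gv) <= g ->
  gain_estimate Kp Kv lam gp gv a b
    (fun r t => KK Kp Kv lam * r * exp (- (kk Kp Kv lam / 2) * t)) g.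
Proof.
  intros HKp HKv Hl Hgp Hgv Ha Hb Hg N x1 x2 x3 Hsol i Hi t Ht M HM Hbd.
  assert (HU : 0 <= 2 * (a * gp + b * gv) * M).
  { apply Rmult_le_pos; [|lra]. assert (0 <= a*gp) by nra. assert (0 <= b*gv) by nra. lra. }
  assert (H := pair_iss Kp Kv lam _ _ _ _ t (2 * (a * gp + b * gv) * M) HKp HKv Hl (Hsol i Hi) Ht HU).
  unfold chi_norm. eapply Rle_trans; [apply H|].
  - intros s Hs. apply coupling_bound with (x3 := x3); auto.
  - assert (2 * GG Kp Kv lam * (a * gp + b * gv) * M <= g * M) by (apply Rmult_le_compat_r; auto).
    set (Z := KK Kp Kv lam). set (E := exp (- (kk Kp Kv lam / 2) * t)). set (n := nrm3 (x1 i 0) (x2 i 0) (x3 i 0)).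
    set (G := GG Kp Kv lam) in *.
    replace (Z * n * E) with (Z * E * n) by ring.
    replace (G * (2 * (a * gp + b * gv) * M)) with (2 * G * (a * gp + b * gv) * M) by ring.
    lra.
Qed.

Lemma traj_shift f df S : 0 < S -> traj_on f df -> traj_on (fun t => f (t+S)) (fun t => df (t+S)).
Proof.
  intros HS [H0 Hd]. split.
  - intros eps He.
    assert (Hc : continuous f S).
    { apply (ex_derive_continuous (K:=R_AbsRing) (V:=R_NormedModule)). exists (df S). apply Hd; lra. }
    destruct (cont_to_ed f S Hc eps He) as [d [Hd0 Hy]].
    exists d; split; auto. intros s Hs. rewrite Rplus_0_l. apply Hy.
    replace (s + S - S) with s by ring. rewrite Rabs_pos_eq; lra.
  - intros t Ht.
    assert (Hg : is_derive (fun t => t + S) t 1) by (auto_derive; auto; ring).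
    assert (H := is_derive_comp f (fun t => t + S) t (df (t+S)) 1 (Hd (t+S) ltac:(lra)) Hg).
    replace (df (t+S)) with (scal 1 (df (t+S))) by (unfold scal; simpl; unfold mult; simpl; ring).
    exact H.
Qed.

Lemma pair_shift Kp Kv lam u x1 x2 x3 S : 0 < S -> pair_sol Kp Kv lam u x1 x2 x3 ->
  pair_sol Kp Kv lam (fun t => u (t+S)) (fun t => x1 (t+S)) (fun t => x2 (t+S)) (fun t => x3 (t+S)).
Proof.
  intros HS [A [B C]]. split; [|split].
  - exact (traj_shift _ _ S HS A).
  - exact (traj_shift _ _ S HS B).
  - exact (traj_shift _ _ S HS C).
Qed.

Lemma platoon_shift Kp Kv lam gp gv a b N x1 x2 x3 S : 0 < S ->
  platoon_sol Kp Kv lam gp gv a b N x1 x2 x3 ->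
  platoon_sol Kp Kv lam gp gv a b N (fun j t => x1 j (t+S)) (fun j t => x2 j (t+S)) (fun j t => x3 j (t+S)).
Proof.
  intros HS H i Hi. exact (pair_shift _ _ _ _ _ _ _ S HS (H i Hi)).
Qed.

Lemma fin_max (f : nat -> R) N : exists A, 0 <= A /\ forall i, (i <= N)%nat -> f i <= A.
Proof.
  induction N as [|N IHN].
  - exists (Rmax 0 (f 0%nat)). split; [apply Rmax_l|]. intros i Hi.
    assert (i = 0%nat) by lia. subst. apply Rmax_r.
  - destruct IHN as [A [HA H]]. exists (Rmax A (f (S N))). split.
    + eapply Rle_trans; [exact HA|apply Rmax_l].
    + intros i Hi. destruct (Nat.eq_dec i (S N)) as [->|Hne]; [apply Rmax_r|].
      eapply Rle_trans; [apply H; lia|apply Rmax_l].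
Qed.

Lemma fin_T (P : nat -> R -> Prop) i :
  (forall j, (j < i)%nat -> exists T, forall tau, T < tau -> P j tau) ->
  exists T, forall j, (j < i)%nat -> forall tau, T < tau -> P j tau.
Proof.
  induction i as [|i IHi]; intros H.
  - exists 0. intros; lia.
  - destruct IHi as [T1 H1]. { intros j Hj. apply H; lia. }
    destruct (H i ltac:(lia)) as [T2 H2].
    exists (Rmax T1 T2). intros j Hj tau Htau.
    destruct (Nat.eq_dec j i) as [->|Hne].
    + apply H2. eapply Rle_lt_trans; [apply Rmax_r|exact Htau].
    + apply H1; [lia|]. eapply Rle_lt_trans; [apply Rmax_l|exact Htau].
Qed.

Lemma chi_nonneg x1 x2 x3 i t : 0 <= chi_norm x1 x2 x3 i t.
Proof. unfold chi_norm, nrm3. apply sqrt_pos. Qed.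

Section KLprops.
End KLprops.

Lemma beta_mono_r beta : classKL beta -> forall t r s, 0 <= t -> 0 <= r -> r <= s -> beta r t <= beta s t.
Proof.
  intros [H1 _] t r s Ht Hr Hrs. destruct (H1 t Ht) as [_ [_ Hinc]].
  destruct (Rle_lt_or_eq_dec _ _ Hrs) as [H|H]; [left; apply Hinc; auto| subst; lra].
Qed.

Lemma beta_mono_t beta : classKL beta -> forall r t1 t2, 0 <= r -> 0 <= t1 -> t1 <= t2 -> beta r t2 <= beta r t1.
Proof. intros [_ H2] r t1 t2 Hr H1 H12. destruct (H2 r Hr) as [Hm _]. apply Hm; auto. Qed.

Lemma beta_nonneg beta : classKL beta -> forall r t, 0 <= r -> 0 <= t -> 0 <= beta r t.
Proof.
  intros HKL r t Hr Ht. assert (H := beta_mono_r beta HKL t 0 r Ht (Rle_refl 0) Hr).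
  destruct HKL as [H1 _]. destruct (H1 t Ht) as [H0 _]. rewrite H0 in H. exact H.
Qed.

Lemma bound_all Kp Kv lam gp gv a b beta g :
  classKL beta -> 0 < g < 1 -> gain_estimate Kp Kv lam gp gv a b beta g ->
  forall N x1 x2 x3 A, platoon_sol Kp Kv lam gp gv a b N x1 x2 x3 -> 0 <= A ->
  (forall i, (i <= N)%nat -> beta (chi_norm x1 x2 x3 i 0) 0 <= A) ->
  forall i, (i <= N)%nat -> forall t, 0 <= t -> chi_norm x1 x2 x3 i t <= A / (1 - g).
Proof.
  intros HKL Hg Hgain N x1 x2 x3 A Hsol HA HbA i.
  induction i as [i IH] using lt_wf_ind. intros Hi t Ht.
  assert (HB : 0 <= A/(1-g)) by (apply Rdiv_le_0_compat; lra).
  eapply Rle_trans.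
  { apply (Hgain N x1 x2 x3 Hsol i Hi t Ht (A/(1-g)) HB).
    intros j tau Hj Htau. apply IH; auto; [lia|lra]. }
  assert (beta (chi_norm x1 x2 x3 i 0) t <= beta (chi_norm x1 x2 x3 i 0) 0)
    by (apply beta_mono_t; auto; [apply chi_nonneg|lra]).
  specialize (HbA i Hi).
  assert (A + g*(A/(1-g)) = A/(1-g)) by (field; lra). lra.
Qed.

Lemma ass_from_gain Kp Kv lam gp gv a b beta g :
  classKL beta -> 0 < g < 1 -> gain_estimate Kp Kv lam gp gv a b beta g ->
  AsymptoticallyStringStable Kp Kv lam gp gv a b.
Proof.
  intros HKL Hg Hgain. split.
  - intros eps He.
    destruct HKL as [H1 H2] eqn:EKL. destruct (H1 0 (Rle_refl 0)) as [H00 [Hc _]].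
    assert (HA : 0 < eps * (1-g) / 2) by (apply Rdiv_lt_0_compat; nra).
    destruct (Hc 0 (Rle_refl 0) _ HA) as [d [Hd Hy]].
    exists d; split; auto. intros N x1 x2 x3 Hsol H0 t Ht i Hi.
    assert (Hb := bound_all Kp Kv lam gp gv a b beta g HKL Hg Hgain N x1 x2 x3 (eps*(1-g)/2) Hsol (Rlt_le _ _ HA)).
    eapply Rle_lt_trans; [apply Hb; auto|].
    + intros j Hj. specialize (Hy (chi_norm x1 x2 x3 j 0) (chi_nonneg _ _ _ _ _)).
      rewrite H00, !Rminus_0_r in Hy. rewrite Rabs_pos_eq in Hy by apply chi_nonneg.
      specialize (Hy (H0 j Hj)).
      rewrite Rabs_pos_eq in Hy by (apply beta_nonneg; auto; [apply chi_nonneg| lra]). lra.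
    + replace (eps * (1 - g) / 2 / (1 - g)) with (eps/2) by (field; lra). lra.
  - intros N x1 x2 x3 Hsol.
    destruct (fin_max (fun i => beta (chi_norm x1 x2 x3 i 0) 0) N) as [A [HA HbA]].
    assert (HB0 : 0 <= A/(1-g)) by (apply Rdiv_le_0_compat; lra).
    set (B := A/(1-g)) in *.
    assert (HB : forall i, (i<=N)%nat -> forall t, 0<=t -> chi_norm x1 x2 x3 i t <= B)
      by (apply (bound_all Kp Kv lam gp gv a b beta g HKL Hg Hgain N x1 x2 x3 A Hsol HA HbA)).
    intros i. induction i as [i IH] using lt_wf_ind. intros Hi.
    apply is_lim_spec. intros eps. simpl.
    assert (He := cond_pos eps). set (e := pos eps) in *.
    assert (Hj : forall j, (j < i)%nat -> exists T, forall tau, T < tau -> chi_norm x1 x2 x3 j tau < e/4).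
    { intros j Hji. assert (L := IH j Hji ltac:(lia)). apply is_lim_spec in L.
      assert (He4 : 0 < e/4) by lra.
      specialize (L (mkposreal (e/4) He4)). simpl in L. destruct L as [T HT].
      exists T. intros tau Htau. specialize (HT tau Htau).
      rewrite Rminus_0_r, Rabs_pos_eq in HT by apply chi_nonneg. exact HT. }
    destruct (fin_T _ i Hj) as [T HT].
    set (S := Rmax T 0 + 1).
    assert (HS : 0 < S) by (unfold S; assert (H := Rmax_r T 0); lra).
    assert (HST : T < S) by (unfold S; assert (H := Rmax_l T 0); lra).
    assert (HKL2 := proj2 HKL). destruct (HKL2 B HB0) as [_ Hlim].
    apply is_lim_spec in Hlim.
    assert (He2 : 0 < e/2) by lra.
    specialize (Hlim (mkposreal (e/2) He2)). simpl in Hlim. destruct Hlim as [T2 HT2].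
    exists (S + Rmax T2 0). intros x Hx.
    assert (HT2' := Rmax_l T2 0). assert (HT2'' := Rmax_r T2 0).
    set (t := x - S).
    assert (Ht : 0 <= t) by (unfold t; lra).
    assert (Hsh := platoon_shift Kp Kv lam gp gv a b N x1 x2 x3 S HS Hsol).
    assert (G := Hgain N _ _ _ Hsh i Hi t Ht (e/4) ltac:(lra)).
    unfold chi_norm in G. cbv beta in G.
    replace (t + S) with x in G by (unfold t; ring).
    rewrite Rplus_0_l in G.
    assert (G1 : beta (nrm3 (x1 i S) (x2 i S) (x3 i S)) t <= beta B t).
    { apply beta_mono_r; auto. apply chi_nonneg. apply (HB i Hi S); lra. }
    assert (G2 : Rabs (beta B t - 0) < e/2) by (apply HT2; unfold t; lra).
    rewrite Rminus_0_r in G2. apply Rabs_lt_between in G2.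
    rewrite Rminus_0_r, Rabs_pos_eq by apply chi_nonneg.
    unfold chi_norm.
    assert (G3 : nrm3 (x1 i x) (x2 i x) (x3 i x) <= beta B t + g*(e/4)).
    { eapply Rle_trans; [apply G|]. { intros j tau Hji Htau. left. unfold chi_norm. cbv beta.
        apply (HT j Hji (tau + S)). lra. } lra. }
    assert (g * (e/4) < e/4) by nra. lra.
Qed.

Theorem theorem2 (Kp Kv lam gp gv : R) :
  0 < Kp -> 0 < Kv -> 0 < lam -> 0 < gp -> 0 < gv ->
  (* (1) isolated subsystem: origin globally exponentially stable *)
  (exists c k, 0 < c /\ 0 < k /\
     forall x1 x2 x3 : R -> R,
       pair_sol Kp Kv lam (fun _ => 0) x1 x2 x3 ->
       forall t, 0 <= t ->
         nrm3 (x1 t) (x2 t) (x3 t) <= c * exp (- k * t) * nrm3 (x1 0) (x2 0) (x3 0)) /\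
  (* (2) gain estimate for every a, b >= 0 *)
  (forall a b, 0 <= a -> 0 <= b ->
     exists beta g, classKL beta /\ 0 < g /\ gain_estimate Kp Kv lam gp gv a b beta g) /\
  (* (3a) some a, b >= 0, not both zero, give a gain in (0,1) *)
  (exists a b, 0 <= a /\ 0 <= b /\ (a <> 0 \/ b <> 0) /\
     exists beta g, classKL beta /\ 0 < g < 1 /\ gain_estimate Kp Kv lam gp gv a b beta g) /\
  (* (3b) for such a, b the origin is Asymptotically String Stable *)
  (forall a b, 0 <= a -> 0 <= b ->
     (exists beta g, classKL beta /\ 0 < g < 1 /\ gain_estimate Kp Kv lam gp gv a b beta g) ->
     AsymptoticallyStringStable Kp Kv lam gp gv a b).
Proof.
  intros HKp HKv Hl Hgp Hgv.
  destruct (kk_props Kp Kv lam HKp HKv Hl) as [Hk0 [Hk1 [Hk2 Hk3]]].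
  assert (HP : 0 < /(lam*Kv)) by (apply Rinv_0_lt_compat; nra).
  assert (Hc1 : 0 < c1 Kp Kv lam) by (unfold c1; apply Rmult_lt_0_compat; nra).
  assert (Hc2 : 0 < c2 Kp Kv lam) by (unfold c2; assert (0 < lam*Kv) by nra; nra).
  assert (HKK : 0 < KK Kp Kv lam) by (unfold KK; apply sqrt_lt_R0; nra).
  assert (HGG : 0 < GG Kp Kv lam).
  { unfold GG; apply sqrt_lt_R0. apply Rdiv_lt_0_compat; nra. }
  split; [|split; [|split]].
  - exists (KK Kp Kv lam), (kk Kp Kv lam / 2). split; [auto|split; [lra|]].
    intros x1 x2 x3 Hs t Ht.
    assert (H := pair_iss Kp Kv lam (fun _ => 0) x1 x2 x3 t 0 HKp HKv Hl Hs Ht (Rle_refl 0)).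
    rewrite Rmult_0_r, Rplus_0_r in H. apply H. intros s _. rewrite Rabs_R0. lra.
  - intros a b Ha Hb.
    exists (fun r t => KK Kp Kv lam * r * exp (- (kk Kp Kv lam / 2) * t)),
      (2 * GG Kp Kv lam * (a * gp + b * gv) + 1).
    split; [apply KL_exp; lra|split].
    + assert (0 <= a*gp) by nra. assert (0 <= b*gv) by nra.
      assert (0 <= 2 * GG Kp Kv lam * (a * gp + b * gv)) by (apply Rmult_le_pos; lra). lra.
    + apply gain_lemma; auto. lra.
  - exists (1 / (4 * GG Kp Kv lam * gp)), 0.
    assert (Ha : 0 < 1 / (4 * GG Kp Kv lam * gp)) by (apply Rdiv_lt_0_compat; nra).
    split; [lra|split; [lra|split; [left; lra|]]].
    exists (fun r t => KK Kp Kv lam * r * exp (- (kk Kp Kv lam / 2) * t)), (3/4).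
    split; [apply KL_exp; lra|split; [lra|]].
    apply gain_lemma; auto; try lra.
    replace (2 * GG Kp Kv lam * (1 / (4 * GG Kp Kv lam * gp) * gp + 0 * gv)) with (1/2) by (field; lra).
    lra.
  - intros a b Ha Hb [beta [g [H1 [H2 H3]]]]. eapply ass_from_gain; eauto.
Qed.
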